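(* Let $k\ge\ell\ge\ell'\ge t\ge1$ be integers and, for $i\in[2]$, let $\omega_i:[0,k]\to\mathbb{R}_{\ge0}$ be non-increasing functions. Let $\mathcal{F}\subseteq\{F\subseteq[k]:|F|\le\ell\}$ and $\mathcal{G}\subseteq\{G\subseteq[k]:|G|\le\ell'\}$ be non-empty cross $t$-intersecting families with maximal necessary intersection point $a$. Suppose that $a\ge t+1$, $\mathcal{F}\setminus\mathcal{F}^a\neq\emptyset$ and $\mathcal{G}\setminus\mathcal{G}^a\ne\emptyset$. Then there are families $\mathcal{F}^*\subseteq\{F\subseteq[k]:|F|\le\ell\}$ and $\mathcal{G}^*\subseteq\{G\subseteq[k]:|G|\le\ell'\}$ such that (1) $\mathcal{F}^*,\mathcal{G}^*$ are non-empty and cross $t$-intersecting; (2) $\omega_1(\mathcal{F}^* )+\omega_2(\mathcal{G}^* )\ge\omega_1(\mathcal{F})+\omega_2(\mathcal{G})$; (3) the maximal necessary intersection point of $\mathcal{F}^*$ and $\mathcal{G}^*$ is smaller than $a$. Moreover, (4) such $\mathcal{F}^*,\mathcal{G}^*$ satisfying (1)–(3) can be chosen to be shifted.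
   Context: Families are cross $t$-intersecting if $|F\cap G|\ge t$ for all $F\in\mathcal{F},G\in\mathcal{G}$. For cross $t$-intersecting $\mathcal{F},\mathcal{G}\subseteq2^{[k]}$, $a\in[k]$ is a necessary intersection point if there exist $F\in\mathcal{F},G\in\mathcal{G}$ with $|[a]\cap F\cap G|=t$ and $a\in F\cap G$; the maximal one is the largest such $a$. With $a$ the maximal necessary intersection point, $\mathcal{F}^a=\{F\in\mathcal{F}:\exists G\in\mathcal{G},\ |[a]\cap F\cap G|=t,\ a\in F\cap G\}$ and $\mathcal{G}^a=\{G\in\mathcal{G}:\exists F\in\mathcal{F},\ |[a]\cap F\cap G|=t,\ a\in F\cap G\}$. For $\omega:[0,k]\to\mathbb{R}_{\ge0}$, $\omega(F)=\omega(|F|)$ and $\omega(\mathcal{F})=\sum_{F\in\mathcal{F}}\omega(F)$; non-increasing means $\omega(i)\ge\omega(j)$ for $i\le j$. The shifting operator: for $i<j$, $s_{i,j}(F)=(F\setminus\{j\})\cup\{i\}$ if $j\in F$, $i\notin F$ and $(F\setminus\{j\})\cup\{i\}\notin\mathcal{F}$, else $s_{i,j}(F)=F$; $s_{i,j}(\mathcal{F})=\{s_{i,j}(F):F\in\mathcal{F}\}$. A family $\mathcal{F}\subseteq2^{[k]}$ is shifted if $s_{i,j}(\mathcal{F})=\mathcal{F}$ for all $1\le i<j\le k$. *)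

(* Defs.v *)
(* Ground set [k] = {1,...,k} is represented by 'I_k, the
   element x : 'I_k standing for x+1 (order-preserving relabelling). *)
From HB Require Import structures.
From mathcomp Require Import all_boot all_order all_algebra.
Set Implicit Arguments. Unset Strict Implicit. Unset Printing Implicit Defensive.
Import Order.TTheory GRing.Theory Num.Theory.

Section Defs.
Variable k : nat.

Definition cross_t_intersecting (t : nat) (FF GG : {set {set 'I_k}}) : Prop :=
  forall F G, F \in FF -> G \in GG -> t <= #|F :&: G|.

Definition nip_pair (t : nat) (a : 'I_k) (F G : {set 'I_k}) : bool :=
  (#|[set x in F :&: G | x <= a]| == t) && (a \in F :&: G).

Definition nec_int_point (t : nat) (FF GG : {set {set 'I_k}}) (a : 'I_k) : Prop :=
  exists F G, [/\ F \in FF, G \in GG & nip_pair t a F G].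

Definition max_nec_int_point (t : nat) (FF GG : {set {set 'I_k}}) (a : 'I_k) : Prop :=
  nec_int_point t FF GG a /\ forall b, nec_int_point t FF GG b -> b <= a.

Definition fam_a (t : nat) (FF GG : {set {set 'I_k}}) (a : 'I_k) : {set {set 'I_k}} :=
  [set F in FF | [exists G in GG, nip_pair t a F G]].
Definition fam_a' (t : nat) (FF GG : {set {set 'I_k}}) (a : 'I_k) : {set {set 'I_k}} :=
  [set G in GG | [exists F in FF, nip_pair t a F G]].

Definition shift_set (FF : {set {set 'I_k}}) (i j : 'I_k) (F : {set 'I_k}) : {set 'I_k} :=
  if [&& j \in F, i \notin F & (i |: (F :\ j)) \notin FF] then i |: (F :\ j) else F.
Definition shift_fam (FF : {set {set 'I_k}}) (i j : 'I_k) : {set {set 'I_k}} :=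
  [set shift_set FF i j F | F in FF].
Definition shifted (FF : {set {set 'I_k}}) : Prop :=
  forall i j : 'I_k, i < j -> shift_fam FF i j = FF.

Definition weight (R : numDomainType) (w : nat -> R) (FF : {set {set 'I_k}}) : R :=
  (\sum_(F in FF) w #|F|)%R.

End Defs.

(* Main.v *)
Require Import Defs.
From HB Require Import structures.
From mathcomp Require Import all_boot all_order all_algebra.
From mathcomp Require Import lra.
Import Order.TTheory GRing.Theory Num.Theory.
Set Implicit Arguments. Unset Strict Implicit. Unset Printing Implicit Defensive.

Section Aux.
Variable k : nat.
Implicit Types (S Y F G H : {set 'I_k}) (FF GG : {set {set 'I_k}}).

Lemma exists_tth (t : nat) S : 1 <= t -> t <= #|S| ->
  exists2 b, b \in S & #|[set x in S | x <= b]| = t.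
Proof.
move=> t1; move: {2}#|S| (leqnn #|S|) => n; elim: n S => [|n IH] S.
  by rewrite leqn0 => /eqP ->; rewrite leqNgt t1.
move=> Sn tS.
have [x0 x0S] : {x0 | x0 \in S}.
  case: (set_0Vmem S) => [h|[x xS]]; last by exists x.
  by move: tS; rewrite h cards0 leqNgt t1.
set b := [arg max_(b > x0 in S) (b : nat)].
have [bS bmax] : b \in S /\ forall y, y \in S -> y <= b.
  by rewrite /b; case: arg_maxnP => // c cS cm; split=> // y /cm.
have eqS : [set x in S | x <= b] = S.
  by apply/setP=> y; rewrite inE; case yS: (y \in S) => //=; rewrite bmax.
have [eqt|] := eqVneq #|S| t.
  by exists b => //; rewrite eqS.
move=> neq.
have tS' : t <= #|S :\ b|.
  move: tS neq; rewrite (cardsD1 b S) bS add1n => tS neq.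
  by rewrite -ltnS ltn_neqAle eq_sym neq tS.
have Sn' : #|S :\ b| <= n by move: Sn; rewrite (cardsD1 b S) bS.
have [c cS' hc] := IH _ Sn' tS'.
exists c; first by move: cS'; rewrite inE => /andP[].
rewrite -hc; apply: eq_card => y; rewrite !inE.
case: (eqVneq y b) => [->|//].
move: cS'; rewrite !inE => /andP[cb /bmax cleb].
have : c < b by rewrite ltn_neqAle cleb andbT; apply: contra cb => /eqP h; apply/eqP/val_inj.
by move=> cltb; rewrite bS /= leqNgt cltb.
Qed.

Lemma cnt_mono (Y Y' : {set 'I_k}) (i j : 'I_k) (m : nat) :
  i < j -> i \notin Y -> (forall x, x \in Y -> x != j -> x \in Y') ->
  (j \in Y -> i \in Y') ->
  #|[set x in Y | x < m]| <= #|[set x in Y' | x < m]|.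
Proof.
move=> ij iY h1 h2.
pose phi x := if x == j then i else x.
have inj : {in [set x in Y | x < m] &, injective phi}.
  move=> x y; rewrite !inE /phi => /andP[xY _] /andP[yY _].
  case: eqP => [->|_]; case: eqP => [->|_] //.
  - by move=> h; move: iY; rewrite h yY.
  - by move=> h; move: iY; rewrite -h xY.
rewrite -(card_in_imset inj); apply: subset_leq_card.
apply/subsetP=> z /imsetP[x]; rewrite inE => /andP[xY xm] ->.
rewrite /phi inE; case: eqP => [e|/eqP ne].
  by move: xY xm; rewrite e => jY jm; rewrite h2 //= (ltn_trans ij jm).
by rewrite h1.
Qed.

Lemma cnt_le_lt (Y : {set 'I_k}) (a : 'I_k) :
  #|[set x in Y | x <= a]| = (a \in Y) + #|[set x in Y | x < a]|.
Proof.
rewrite (cardsD1 a); congr (_ + _); first by rewrite inE leqnn andbT.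
apply: eq_card => x; rewrite !inE ltn_neqAle.
have [->|ne] := eqVneq x a; first by rewrite eqxx andbF.
have -> : (nat_of_ord x != a) by apply: contra ne => /eqP h; apply/eqP/val_inj.
by [].
Qed.

End Aux.
Section Shift.
Variable k : nat.
Variable t : nat.
Implicit Types (S Y F G H : {set 'I_k}) (FF GG : {set {set 'I_k}}).

Definition Xc (m : nat) FF GG := forall F G, F \in FF -> G \in GG ->
  t <= #|[set x in F :&: G | x < m]|.

Definition potS F := \sum_(x in F) (x : nat).
Definition potF FF := \sum_(F in FF) potS F.

Lemma Xc_sym m FF GG : Xc m FF GG -> Xc m GG FF.
Proof. by move=> h G F GG' FF'; rewrite setIC; apply: h. Qed.

Lemma shift_cases FF (i j : 'I_k) F :
  shift_set FF i j F = F \/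
  [/\ j \in F, i \notin F, i |: (F :\ j) \notin FF & shift_set FF i j F = i |: (F :\ j)].
Proof.
rewrite /shift_set; case: ifP => [/and3P[a b c]|_]; last by left.
by right.
Qed.

Lemma shift_ne (i j : 'I_k) F : j \in F -> i \notin F -> i |: (F :\ j) != F.
Proof.
move=> jF iF; apply/eqP=> e; move: iF; rewrite -e !inE eqxx //.
Qed.

Lemma card_shift FF (i j : 'I_k) F : #|shift_set FF i j F| = #|F|.
Proof.
case: (shift_cases FF i j F) => [->|[jF iF _ ->]] //.
rewrite cardsU1 (cardsD1 j F) jF !inE negb_and negbK iF orbT.
by [].
Qed.

Lemma inj_shift FF (i j : 'I_k) : {in FF &, injective (shift_set FF i j)}.
Proof.
move=> F1 F2 F1in F2in.
case: (shift_cases FF i j F1) => [->|[jF1 iF1 n1 ->]];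
case: (shift_cases FF i j F2) => [->|[jF2 iF2 n2 ->]] //.
- by move=> e; move: n2; rewrite -e F1in.
- by move=> e; move: n1; rewrite e F2in.
move=> e.
have : (i |: F1 :\ j) :\ i :|: [set j] = (i |: F2 :\ j) :\ i :|: [set j] by rewrite e.
have h (F' : {set 'I_k}) : j \in F' -> i \notin F' -> (i |: F' :\ j) :\ i :|: [set j] = F'.
  move=> jF iF; apply/setP=> x; rewrite !inE.
  have [->|nj] := eqVneq x j; first by rewrite jF !orbT.
  have [->|ni] := eqVneq x i; rewrite /=; last by rewrite orbF.
  by rewrite (negbTE iF).
by rewrite !h.
Qed.

Lemma pot_shift FF (i j : 'I_k) F : i < j ->
  potS (shift_set FF i j F) + (shift_set FF i j F != F) <= potS F.
Proof.
move=> ij.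
case: (shift_cases FF i j F) => [->|[jF iF _ ->]]; first by rewrite eqxx addn0.
rewrite shift_ne // /potS big_setU1 /=; last by rewrite !inE negb_and iF orbT.
rewrite (big_setD1 j jF) /= addn1 -addSn leq_add2r.
by [].
Qed.

Lemma shift_fam_mem FF (i j : 'I_k) F' :
  F' \in shift_fam FF i j -> exists2 F, F \in FF & F' = shift_set FF i j F.
Proof. by move/imsetP. Qed.

Lemma Xc_mixed m FF GG (i j : 'I_k) F G : i < j -> Xc m FF GG ->
  F \in FF -> G \in GG -> shift_set GG i j G = G ->
  t <= #|[set x in shift_set FF i j F :&: G | x < m]|.
Proof.
move=> ij hX FF1 GG1 sG.
case: (shift_cases FF i j F) => [->|[jF iF _ ->]]; first exact: hX.
have base : i \notin F :&: G by rewrite inE negb_and iF.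
case jG: (j \in G); last first.
  apply: leq_trans (hX _ _ FF1 GG1) (cnt_mono m ij base _ _).
    by move=> x; rewrite !inE => /andP[-> ->] ->; rewrite orbT.
  by rewrite inE jG andbF.
case iG: (i \in G).
  apply: leq_trans (hX _ _ FF1 GG1) (cnt_mono m ij base _ _).
    by move=> x; rewrite !inE => /andP[-> ->] ->; rewrite orbT.
  by rewrite !inE eqxx iG.
have HG : i |: (G :\ j) \in GG.
  move: sG; rewrite /shift_set jG iG /=; case: ifP => [_ e|/negbFE //].
  by move: iG; rewrite -e !inE eqxx.
have -> : (i |: F :\ j) :&: G = F :&: (i |: G :\ j).
  apply/setP=> x; rewrite !inE.
  have [->|ni] := eqVneq x i; rewrite /=; first by rewrite iG (negbTE iF).
  by case: (x != j); case: (x \in F).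
exact: hX.
Qed.

Lemma Xc_shift m FF GG (i j : 'I_k) : i < j -> Xc m FF GG ->
  Xc m (shift_fam FF i j) (shift_fam GG i j).
Proof.
move=> ij hX F' G' /shift_fam_mem[F FF1 ->] /shift_fam_mem[G GG1 ->].
case: (shift_cases GG i j G) => [e|[jG iG _ eG]].
  by rewrite e; exact: (Xc_mixed ij hX FF1 GG1 e).
case: (shift_cases FF i j F) => [e|[jF iF _ eF]].
  by rewrite e setIC; exact: (Xc_mixed ij (Xc_sym hX) GG1 FF1 e).
rewrite eF eG.
have base : i \notin F :&: G by rewrite inE negb_and iF.
apply: leq_trans (hX _ _ FF1 GG1) (cnt_mono m ij base _ _).
  by move=> x; rewrite !inE => /andP[-> ->] ->; rewrite !orbT.
by rewrite !inE eqxx.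
Qed.

Lemma weight_shift (R : numDomainType) (w : nat -> R) FF (i j : 'I_k) :
  weight w (shift_fam FF i j) = weight w FF.
Proof.
rewrite /weight /shift_fam big_imset; last exact: inj_shift.
by apply: eq_bigr => F _; rewrite card_shift.
Qed.

Lemma potF_shift FF (i j : 'I_k) : i < j ->
  potF (shift_fam FF i j) + (shift_fam FF i j != FF) <= potF FF.
Proof.
move=> ij; rewrite /potF /shift_fam big_imset; last exact: inj_shift.
case: (boolP [forall F in FF, shift_set FF i j F == F]) => [/forall_inP h|].
  have -> : [set shift_set FF i j F | F in FF] = FF.
    by rewrite -[RHS]imset_id; apply: eq_in_imset => F /h /eqP.
  rewrite eqxx addn0; apply: leq_sum => F _.
  by apply: leq_trans (pot_shift FF F ij); apply: leq_addr.
rewrite negb_forall_in => /existsP[F0 /andP[F0in ne]].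
rewrite (bigD1 F0 F0in) [X in _ <= X](bigD1 F0 F0in) /=.
apply: leq_trans (leq_add (leqnn _) (leq_b1 _)) _.
rewrite addn1 -addSn leq_add //.
  by have := pot_shift FF F0 ij; rewrite ne addn1.
apply: leq_sum => F _; by apply: leq_trans (pot_shift FF F ij); apply: leq_addr.
Qed.

End Shift.
Section Main.
Variable k : nat.
Variable t : nat.
Implicit Types (S Y F G H : {set 'I_k}) (FF GG : {set {set 'I_k}}).

Lemma nip_sym (a : 'I_k) F G : nip_pair t a F G = nip_pair t a G F.
Proof. by rewrite /nip_pair setIC. Qed.

Lemma fam_sym FF GG (a : 'I_k) : fam_a' t FF GG a = fam_a t GG FF a.
Proof.
apply/setP=> G; rewrite !inE; congr (_ && _).
by apply/existsP/existsP => [[F h]|[F h]]; exists F; rewrite nip_sym.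
Qed.

Lemma cross_sym FF GG : cross_t_intersecting t FF GG -> cross_t_intersecting t GG FF.
Proof. by move=> h G F G1 F1; rewrite setIC; apply: h. Qed.

Lemma nec_sym FF GG (b : 'I_k) : nec_int_point t FF GG b -> nec_int_point t GG FF b.
Proof. by case=> F [G [F1 G1 h]]; exists G, F; split=> //; rewrite nip_sym. Qed.

Lemma max_sym FF GG (a : 'I_k) : max_nec_int_point t FF GG a -> max_nec_int_point t GG FF a.
Proof.
case=> h1 h2; split; first exact: nec_sym.
by move=> b /nec_sym; apply: h2.
Qed.

Lemma nip_of_cross FF GG F G : 1 <= t -> cross_t_intersecting t FF GG ->
  F \in FF -> G \in GG -> exists2 b, nip_pair t b F G & nec_int_point t FF GG b.
Proof.
move=> t1 hc F1 G1.
have [b bY hb] := exists_tth t1 (hc _ _ F1 G1).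
have nb : nip_pair t b F G by rewrite /nip_pair hb eqxx bY.
by exists b => //; exists F, G.
Qed.

Lemma cntK FF GG (a : 'I_k) F G : 1 <= t -> cross_t_intersecting t FF GG ->
  max_nec_int_point t FF GG a -> F \in FF -> G \in GG ->
  t <= #|[set x in F :&: G | x <= a]|.
Proof.
move=> t1 hc [_ hm] F1 G1.
have [b /andP[/eqP hb _] /hm ba] := nip_of_cross t1 hc F1 G1.
rewrite -hb; apply: subset_leq_card; apply/subsetP=> x; rewrite !inE.
by case/andP=> -> xb; apply: leq_trans xb ba.
Qed.

Lemma cntL FF GG (a : 'I_k) F G : 1 <= t -> cross_t_intersecting t FF GG ->
  max_nec_int_point t FF GG a -> F \in FF -> G \in GG -> G \notin fam_a' t FF GG a ->
  t <= #|[set x in F :&: G | x < a]|.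
Proof.
move=> t1 hc hm F1 G1 nG.
have := cntK t1 hc hm F1 G1; rewrite cnt_le_lt.
case aY: (a \in F :&: G); last by [].
have ne : #|[set x in F :&: G | x <= a]| != t.
  apply: contra nG => e; rewrite inE G1 /=; apply/existsP; exists F.
  by rewrite F1 /nip_pair e aY.
move: ne; rewrite cnt_le_lt aY add1n => ne le.
by rewrite -ltnS ltn_neqAle eq_sym ne le.
Qed.

Lemma notin_FF FF GG (a : 'I_k) F : 1 <= t -> cross_t_intersecting t FF GG ->
  max_nec_int_point t FF GG a -> F \in fam_a t FF GG a -> F :\ a \notin FF.
Proof.
move=> t1 hc hm; rewrite inE => /andP[F1 /existsP[G /andP[G1 /andP[/eqP hb aY]]]].
apply/negP=> H1.
have := cntK t1 hc hm H1 G1.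
rewrite cnt_le_lt !inE eqxx /= add0n.
have -> : #|[set x in (F :\ a) :&: G | x < a]| = #|[set x in F :&: G | x < a]|.
  apply: eq_card => x; rewrite !inE.
  have [->|ne] := eqVneq x a; first by rewrite ltnn !andbF.
  by [].
move: hb; rewrite cnt_le_lt aY add1n => <-.
by rewrite ltnn.
Qed.

Lemma card_le_k (F : {set 'I_k}) : #|F| <= k.
Proof. by rewrite -[X in _ <= X]card_ord max_card. Qed.

Lemma optA (R : realFieldType) (l l' : nat) (w1 w2 : nat -> R) FF GG (a : 'I_k) :
  1 <= t ->
  (forall i j, i <= j -> j <= k -> (w1 j <= w1 i)%R) ->
  (forall F, F \in FF -> #|F| <= l) ->
  (forall G, G \in GG -> #|G| <= l') ->
  FF != set0 -> GG :\: fam_a' t FF GG a != set0 ->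
  cross_t_intersecting t FF GG ->
  max_nec_int_point t FF GG a ->
  exists FF' GG' : {set {set 'I_k}},
    [/\ (forall F, F \in FF' -> #|F| <= l),
        (forall G, G \in GG' -> #|G| <= l'),
        FF' != set0, GG' != set0 &
        Xc t a FF' GG' /\
        (weight w1 FF + weight w2 GG + (weight w1 (fam_a t FF GG a) - weight w2 (fam_a' t FF GG a))
           <= weight w1 FF' + weight w2 GG')%R].
Proof.
move=> t1 mon1 sF sG nF nG hc hm.
set Fa := fam_a t FF GG a; set Ga := fam_a' t FF GG a.
set NF := [set F :\ a | F in Fa].
have FaFF : Fa \subset FF by apply/subsetP=> F; rewrite inE => /andP[].
have GaGG : Ga \subset GG by apply/subsetP=> G; rewrite inE => /andP[].
have aFa : forall F, F \in Fa -> a \in F.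
  by move=> F; rewrite inE => /andP[_ /existsP[G /andP[_ /andP[_]]]]; rewrite inE => /andP[].
have injNF : {in Fa &, injective (fun F => F :\ a)}.
  by move=> F1 F2 /aFa h1 /aFa h2 e; rewrite -(setD1K h1) -(setD1K h2) e.
have disj : forall X, X \in NF -> X \notin FF.
  by move=> X /imsetP[F FFa ->]; apply: (notin_FF t1 hc hm).
exists (FF :|: NF), (GG :\: Ga); split.
- move=> X; rewrite inE => /orP[/sF //|/imsetP[F FFa ->]].
  by apply: leq_trans (sF _ (subsetP FaFF _ FFa)); apply: subset_leq_card; apply: subD1set.
- by move=> G; rewrite inE => /andP[_ /sG].
- apply: contraNneq nF => e; apply/eqP/setP=> X; rewrite inE.
  by apply/negbTE/negP=> XF; move: (in_set0 X); rewrite -e inE XF.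
- exact: nG.
split.
  move=> X G; rewrite inE => /orP[XF|/imsetP[F FFa ->]]; rewrite inE => /andP[nGa G1].
    exact: (cntL t1 hc hm XF G1 nGa).
  have F1 := subsetP FaFF _ FFa.
  have := cntL t1 hc hm F1 G1 nGa.
  have -> : #|[set x in (F :\ a) :&: G | x < a]| = #|[set x in F :&: G | x < a]|.
    apply: eq_card => x; rewrite !inE.
    have [->|ne] := eqVneq x a; first by rewrite ltnn !andbF.
    by [].
  by [].
have e1 : weight w1 (FF :|: NF) = (weight w1 FF + weight w1 NF)%R.
  rewrite /weight (big_setID FF).
  have -> : (FF :|: NF) :&: FF = FF by apply/setP=> X; rewrite !inE; case: (X \in FF); rewrite ?andbF ?andbT.
  have -> : (FF :|: NF) :\: FF = NF.
    apply/setP=> X; rewrite !inE; case XN: (X \in NF); last by rewrite orbF andNb.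
    by rewrite (negbTE (disj _ XN)).
  by [].
have e2 : weight w2 GG = (weight w2 Ga + weight w2 (GG :\: Ga))%R.
  rewrite /weight (big_setID Ga); congr (_ + _)%R.
  by rewrite (setIidPr GaGG).
have e3 : (weight w1 Fa <= weight w1 NF)%R.
  rewrite /weight /NF big_imset //; apply: ler_sum => F FFa.
  apply: mon1; last exact: card_le_k.
  by apply: subset_leq_card; apply: subD1set.
rewrite e1 e2; lra.
Qed.

End Main.
From Stdlib Require Import Classical.
From mathcomp Require Import zify.

Section Fin.
Variable k : nat.
Variable t : nat.
Implicit Types (S Y F G H : {set 'I_k}) (FF GG : {set {set 'I_k}}).

Definition PP (R : realFieldType) (l l' : nat) (w1 w2 : nat -> R) (W0 : R) (m : nat) FF GG :=
  [/\ (forall F, F \in FF -> #|F| <= l), (forall G, G \in GG -> #|G| <= l'),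
      FF != set0, GG != set0 & Xc t m FF GG /\ (W0 <= weight w1 FF + weight w2 GG)%R].

Lemma shiftP_fam FF (i j : 'I_k) l : (forall F, F \in FF -> #|F| <= l) ->
  forall F, F \in shift_fam FF i j -> #|F| <= l.
Proof. by move=> h F /shift_fam_mem[F0 F0in ->]; rewrite card_shift; apply: h. Qed.

Lemma shift_ne0 FF (i j : 'I_k) : FF != set0 -> shift_fam FF i j != set0.
Proof. by rewrite /shift_fam imset_eq0. Qed.

Lemma shift_exists (R : realFieldType) l l' (w1 w2 : nat -> R) W0 m :
  forall n FF GG, PP l l' w1 w2 W0 m FF GG -> potF FF + potF GG < n ->
  exists FF' GG', [/\ PP l l' w1 w2 W0 m FF' GG', shifted FF' & shifted GG'].
Proof.
elim=> [//|n IH] FF GG hP hpot.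
case: (classic (exists i j : 'I_k, i < j /\
   (shift_fam FF i j != FF \/ shift_fam GG i j != GG))) => [[i [j [ij hne]]]|hno].
  case: hP => s1 s2 n1 n2 [hX hW].
  have hP' : PP l l' w1 w2 W0 m (shift_fam FF i j) (shift_fam GG i j).
    split; [exact: shiftP_fam|exact: shiftP_fam|exact: shift_ne0|exact: shift_ne0|split].
      exact: Xc_shift.
    by rewrite !weight_shift.
  apply: (IH _ _ hP').
  have h1 := potF_shift FF ij; have h2 := potF_shift GG ij.
  case: hne => ne; rewrite ne in h1 h2; lia.
exists FF, GG; split=> // i j ij; apply/eqP; apply/negP => ne; apply: hno;
  exists i, j; split=> //.
  by left; apply/negP.
by right; apply/negP.
Qed.

Lemma max_exists FF GG (m : nat) : 1 <= t -> FF != set0 -> GG != set0 ->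
  Xc t m FF GG -> cross_t_intersecting t FF GG ->
  exists a', max_nec_int_point t FF GG a' /\ a' < m.
Proof.
move=> t1 nF nG hX hc.
case: (set_0Vmem FF) => [e|[F F1]]; first by move: nF; rewrite e eqxx.
case: (set_0Vmem GG) => [e|[G G1]]; first by move: nG; rewrite e eqxx.
have [b0 _ [F0 [G0 [F01 G01 nb0]]]] := nip_of_cross t1 hc F1 G1.
set N := [set b : 'I_k | [exists F in FF, exists G in GG, nip_pair t b F G]].
have b0N : b0 \in N.
  by rewrite inE; apply/existsP; exists F0; rewrite F01 /=; apply/existsP; exists G0; rewrite G01.
have necN : forall b, nec_int_point t FF GG b <-> b \in N.
  move=> b; split.
    case=> F' [G' [F'1 G'1 nb]].
    by rewrite inE; apply/existsP; exists F'; rewrite F'1 /=; apply/existsP; exists G'; rewrite G'1.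
  rewrite inE => /existsP[F' /andP[F'1 /existsP[G' /andP[G'1 nb]]]].
  by exists F', G'.
case: (arg_maxnP (fun b : 'I_k => (b : nat)) b0N) => a' a'N a'max.
exists a'; split.
  split; first by apply/necN.
  by move=> b /necN /a'max.
have : a' \in N := a'N.
rewrite inE => /existsP[F' /andP[F'1 /existsP[G' /andP[G'1 /andP[/eqP hb aY]]]]].
rewrite ltnNge; apply/negP => ma.
have := hX _ _ F'1 G'1.
have le : #|[set x in F' :&: G' | x < m]| <= #|[set x in F' :&: G' | x < a']|.
  apply: subset_leq_card; apply/subsetP => x; rewrite !inE => /andP[-> xm] /=.
  exact: leq_trans xm ma.
move: hb; rewrite cnt_le_lt aY add1n => hb.
move=> ht; have := leq_trans ht le; rewrite -hb ltnn //.
Qed.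

End Fin.

Unset Implicit Arguments.
Set Strict Implicit.

Theorem lemma3p5 (R : realFieldType) (k l l' t : nat)
  (w1 w2 : nat -> R) (FF GG : {set {set 'I_k}}) (a : 'I_k) :
  l <= k -> l' <= l -> t <= l' -> 1 <= t ->
  (forall i, i <= k -> (0 <= w1 i)%R) ->
  (forall i, i <= k -> (0 <= w2 i)%R) ->
  (forall i j, i <= j -> j <= k -> (w1 j <= w1 i)%R) ->
  (forall i j, i <= j -> j <= k -> (w2 j <= w2 i)%R) ->
  (forall F, F \in FF -> #|F| <= l) ->
  (forall G, G \in GG -> #|G| <= l') ->
  FF != set0 -> GG != set0 ->
  cross_t_intersecting t FF GG ->
  max_nec_int_point t FF GG a ->
  t + 1 <= a + 1 ->
  FF :\: fam_a t FF GG a != set0 ->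
  GG :\: fam_a' t FF GG a != set0 ->
  exists FF' GG' : {set {set 'I_k}},
    [/\ (forall F, F \in FF' -> #|F| <= l) /\
        (forall G, G \in GG' -> #|G| <= l'),
        [/\ FF' != set0, GG' != set0 & cross_t_intersecting t FF' GG'],
        (weight w1 FF + weight w2 GG <= weight w1 FF' + weight w2 GG')%R,
        (exists a' : 'I_k, max_nec_int_point t FF' GG' a' /\ a' < a)
      & shifted FF' /\ shifted GG'].
Proof.
move=> _ _ _ t1 _ _ mon1 mon2 sF sG nF nG hc hm _ nFa nGa.
set W0 := (weight w1 FF + weight w2 GG)%R.
have [FA [GA [sFA sGA nFA nGA [XA wA]]]] := optA w2 t1 mon1 sF sG nF nGa hc hm.
have nFa2 : FF :\: fam_a' t GG FF a != set0 by rewrite fam_sym.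
have [GB [FB [sGB sFB nGB nFB [XB wB]]]] :=
  optA w1 t1 mon2 sG sF nG nFa2 (cross_sym hc) (max_sym hm).
have hP : exists FF1 GG1 : {set {set 'I_k}}, PP t l l' w1 w2 W0 a FF1 GG1.
  case: (leP 0%R (weight w1 (fam_a t FF GG a) - weight w2 (fam_a' t FF GG a))%R) => hd.
    exists FA, GA; split=> //; split=> //; rewrite /W0; lra.
  exists FB, GB; split=> //; split; first exact: Xc_sym.
  move: wB; rewrite (fam_sym t GG FF) -(fam_sym t FF GG) /W0 => wB; lra.
case: hP => FF1 [GG1 hP].
have [FF' [GG' [[s1 s2 n1 n2 [hX hW]] sh1 sh2]]] :=
  shift_exists hP (ltnSn (potF FF1 + potF GG1)).
have hc' : cross_t_intersecting t FF' GG'.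
  move=> F G F1 G1; apply: leq_trans (hX _ _ F1 G1) _.
  by apply: subset_leq_card; apply/subsetP=> x; rewrite inE => /andP[].
exists FF', GG'; split=> //.
exact: max_exists.
Qed.
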